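(* Let $(X,d)$ be a complete separable metric space and let $f\colon X\to X$ be a continuous map. If $\operatorname{diam}(X)=\sup_{x,y\in X}d(x,y)=\infty$ and $f$ is weakly mixing, then $f$ is densely uniformly Li-Yorke chaotic.
   Context: $f$ is weakly mixing if $f\times f\colon X\times X\to X\times X$ is transitive, i.e. for all nonempty open $U,V\subset X\times X$ there is $n\in\mathbb{N}$ with $U\cap (f\times f)^{-n}(V)\neq\emptyset$. A subset $S\subset X$ with at least two points is uniformly Li-Yorke scrambled for $f$ if there exist sequences $\{p_n\}$, $\{q_n\}$ in $\mathbb{N}$ such that for all distinct $x,y\in S$: $\lim_{n} d(f^{p_n}(x),f^{p_n}(y))=0$ and $\lim_{n} d(f^{q_n}(x),f^{q_n}(y))=\infty$. $f$ is densely uniformly Li-Yorke chaotic if there exists a dense, uncountable, uniformly Li-Yorke scrambled subset of $X$. *)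

(* Defs.v *)
From Stdlib Require Import Reals.
Open Scope R_scope.

Definition is_metric {T : Type} (d : T -> T -> R) : Prop :=
  (forall x y, 0 <= d x y) /\
  (forall x y, d x y = 0 <-> x = y) /\
  (forall x y, d x y = d y x) /\
  (forall x y z, d x z <= d x y + d y z).

Definition cauchy_seq {T : Type} (d : T -> T -> R) (u : nat -> T) : Prop :=
  forall eps, 0 < eps -> exists N, forall m n, (N <= m)%nat -> (N <= n)%nat ->
    d (u m) (u n) < eps.

Definition converges_to {T : Type} (d : T -> T -> R) (u : nat -> T) (l : T) : Prop :=
  forall eps, 0 < eps -> exists N, forall n, (N <= n)%nat -> d (u n) l < eps.

Definition complete_metric {T : Type} (d : T -> T -> R) : Prop :=
  forall u : nat -> T, cauchy_seq d u -> exists l, converges_to d u l.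

(* countability of a subset: enumerated (with possible gaps) by nat *)
Definition countable_set {T : Type} (S : T -> Prop) : Prop :=
  exists e : nat -> option T, forall x, S x -> exists n, e n = Some x.

Definition dense_set {T : Type} (d : T -> T -> R) (S : T -> Prop) : Prop :=
  forall x eps, 0 < eps -> exists s, S s /\ d x s < eps.

Definition separable_metric {T : Type} (d : T -> T -> R) : Prop :=
  exists S : T -> Prop, countable_set S /\ dense_set d S.

Definition metric_continuous {T : Type} (d : T -> T -> R) (f : T -> T) : Prop :=
  forall x eps, 0 < eps -> exists delta, 0 < delta /\
    forall y, d x y < delta -> d (f x) (f y) < eps.

Definition infinite_diameter {T : Type} (d : T -> T -> R) : Prop :=
  forall M : R, exists x y, M < d x y.

(* open subsets of X x X for the product topology (generated by the metric
   max(d(x1,y1), d(x2,y2))) *)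
Definition open2 {T : Type} (d : T -> T -> R) (U : T * T -> Prop) : Prop :=
  forall p, U p -> exists eps, 0 < eps /\
    forall q, d (fst p) (fst q) < eps -> d (snd p) (snd q) < eps -> U q.

Definition prod_map {T : Type} (f : T -> T) (p : T * T) : T * T :=
  (f (fst p), f (snd p)).

(* topological transitivity on X x X, with n ranging over N = {1,2,...} *)
Definition weakly_mixing {T : Type} (d : T -> T -> R) (f : T -> T) : Prop :=
  forall U V : T * T -> Prop,
    open2 d U -> open2 d V -> (exists p, U p) -> (exists p, V p) ->
    exists n : nat, (1 <= n)%nat /\
      exists p, U p /\ V (Nat.iter n (prod_map f) p).

Definition uniformly_LY_scrambled {T : Type} (d : T -> T -> R) (f : T -> T)
    (S : T -> Prop) : Prop :=
  (exists x y, S x /\ S y /\ x <> y) /\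
  exists p q : nat -> nat,
    forall x y, S x -> S y -> x <> y ->
      (forall eps, 0 < eps -> exists N, forall n, (N <= n)%nat ->
          d (Nat.iter (p n) f x) (Nat.iter (p n) f y) < eps) /\
      (forall M, exists N, forall n, (N <= n)%nat ->
          M < d (Nat.iter (q n) f x) (Nat.iter (q n) f y)).

Definition densely_uniformly_LY_chaotic {T : Type} (d : T -> T -> R)
    (f : T -> T) : Prop :=
  exists S : T -> Prop,
    dense_set d S /\ ~ countable_set S /\ uniformly_LY_scrambled d f S.

(* Main.v *)
Require Import Defs.
From Stdlib Require Import Reals Lia Lra Arith Cantor ClassicalEpsilon.
Open Scope R_scope.

Definition open1 {T : Type} (d : T -> T -> R) (U : T -> Prop) : Prop :=
  forall x, U x -> exists eps, 0 < eps /\ forall y, d x y < eps -> U y.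

Lemma arch_inv (eps : R) : 0 < eps -> exists N, forall n, (N <= n)%nat -> / (INR n + 1) < eps.
Proof.
  intros He. destruct (archimed_cor1 eps He) as [N [HN HN0]].
  exists N. intros n Hn. apply le_INR in Hn.
  assert (0 < INR N) by (apply lt_0_INR; lia).
  eapply Rlt_trans; [|exact HN]. apply Rinv_lt_contravar; try nra.
Qed.

Lemma fin_choice {A : Type} (a0 : A) (m : nat) (P : nat -> A -> Prop) :
  (forall i, (i < m)%nat -> exists x, P i x) -> exists g, forall i, (i < m)%nat -> P i (g i).
Proof.
  induction m as [|m IH]; intros H.
  - exists (fun _ => a0). intros; lia.
  - destruct IH as [g Hg]. { intros i Hi; apply H; lia. }
    destruct (H m (Nat.lt_succ_diag_r m)) as [x Hx].
    exists (fun i => if Nat.eqb i m then x else g i). intros i Hi.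
    destruct (Nat.eqb_spec i m). subst; auto. apply Hg; lia.
Qed.

Section M.
Context {T : Type} (d : T -> T -> R) (Hm : is_metric d).

Lemma d_refl x : d x x = 0.
Proof. destruct Hm as [_ [H _]]. apply H; auto. Qed.
Lemma d_sym x y : d x y = d y x.
Proof. destruct Hm as [_ [_ [H _]]]. auto. Qed.
Lemma d_tri x y z : d x z <= d x y + d y z.
Proof. destruct Hm as [_ [_ [_ H]]]. auto. Qed.
Lemma d_pos x y : 0 <= d x y.
Proof. destruct Hm as [H _]. auto. Qed.

Lemma ball_open c r : open1 d (fun y => d c y < r).
Proof.
  intros x Hx. exists (r - d c x). split; [lra|]. intros y Hy.
  pose proof (d_tri c x y). lra.
Qed.

Lemma open_and U V : open1 d U -> open1 d V -> open1 d (fun y => U y /\ V y).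
Proof.
  intros HU HV x [Ux Vx]. destruct (HU x Ux) as [e1 [He1 H1]].
  destruct (HV x Vx) as [e2 [He2 H2]].
  exists (Rmin e1 e2). split. apply Rmin_glb_lt; auto.
  intros y Hy. split. apply H1. eapply Rlt_le_trans; [exact Hy|apply Rmin_l].
  apply H2. eapply Rlt_le_trans; [exact Hy|apply Rmin_r].
Qed.

Lemma open_pre g V : metric_continuous d g -> open1 d V -> open1 d (fun y => V (g y)).
Proof.
  intros Hg HV x Vx. destruct (HV _ Vx) as [e [He H]].
  destruct (Hg x e He) as [dl [Hdl H2]]. exists dl; split; auto.
Qed.

Lemma cont_iter f k : metric_continuous d f -> metric_continuous d (Nat.iter k f).
Proof.
  intros Hf. induction k as [|k IH]; simpl.
  - intros x e He. exists e; split; [auto| intros y Hy; exact Hy].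
  - intros x e He. destruct (Hf (Nat.iter k f x) e He) as [d1 [Hd1 H1]].
    destruct (IH x d1 Hd1) as [d2 [Hd2 H2]]. exists d2; split; [auto|]. intros y Hy. simpl. apply H1. apply H2. exact Hy.
Qed.

Lemma iter_prod (f : T -> T) n x y : Nat.iter n (prod_map f) (x, y) = (Nat.iter n f x, Nat.iter n f y).
Proof. induction n; simpl; auto. rewrite IHn. reflexivity. Qed.

Lemma iter_comm (f : T -> T) k n x : Nat.iter k f (Nat.iter n f x) = Nat.iter n f (Nat.iter k f x).
Proof. rewrite <- !Nat.iter_add. rewrite Nat.add_comm. reflexivity. Qed.

Definition hits (f : T -> T) (U V : T -> Prop) n := exists x, U x /\ V (Nat.iter n f x).

Lemma wm2 f U1 U2 V1 V2 : weakly_mixing d f ->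
  open1 d U1 -> open1 d U2 -> open1 d V1 -> open1 d V2 ->
  (exists x, U1 x) -> (exists x, U2 x) -> (exists x, V1 x) -> (exists x, V2 x) ->
  exists n, (1 <= n)%nat /\ hits f U1 V1 n /\ hits f U2 V2 n.
Proof.
  intros Hw oU1 oU2 oV1 oV2 [a1 Ha1] [a2 Ha2] [b1 Hb1] [b2 Hb2].
  assert (H2 : forall A B, open1 d A -> open1 d B -> open2 d (fun p => A (fst p) /\ B (snd p))).
  { intros A B oA oB [x y] [Ax By]. simpl in *.
    destruct (oA x Ax) as [e1 [He1 H1]]. destruct (oB y By) as [e2 [He2 H2]].
    exists (Rmin e1 e2). split. apply Rmin_glb_lt; auto.
    intros [x' y'] Hx Hy; simpl in *. split.
    apply H1. eapply Rlt_le_trans; [exact Hx|apply Rmin_l].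
    apply H2. eapply Rlt_le_trans; [exact Hy|apply Rmin_r]. }
  destruct (Hw _ _ (H2 U1 U2 oU1 oU2) (H2 V1 V2 oV1 oV2)) as [n [Hn [[x y] [[Ux Uy] HV]]]].
  - exists (a1, a2); simpl; auto.
  - exists (b1, b2); simpl; auto.
  - rewrite iter_prod in HV. simpl in *. destruct HV.
    exists n. split; auto. split; [exists x|exists y]; auto.
Qed.

Lemma reduce f (t0 : T) : weakly_mixing d f -> metric_continuous d f ->
  forall m (U V : nat -> T -> Prop),
  (forall i, (i < m)%nat -> open1 d (U i) /\ open1 d (V i) /\ (exists x, U i x) /\ (exists x, V i x)) ->
  exists U' V', open1 d U' /\ open1 d V' /\ (exists x, U' x) /\ (exists x, V' x) /\
    forall n, hits f U' V' n -> forall i, (i < m)%nat -> hits f (U i) (V i) n.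
Proof.
  intros Hw Hf. induction m as [|m IH]; intros U V H.
  - exists (fun _ => True), (fun _ => True). split; [|split; [|split; [|split]]].
    + intros x _; exists 1; split; [lra|auto].
    + intros x _; exists 1; split; [lra|auto].
    + exists t0; auto.
    + exists t0; auto.
    + intros; lia.
  - destruct (IH U V) as [U' [V' [oU [oV [nU [nV HH]]]]]]. { intros; apply H; lia. }
    destruct (H m (Nat.lt_succ_diag_r m)) as [oUm [oVm [nUm nVm]]].
    destruct (wm2 f U' V' (U m) (V m) Hw oU oV oUm oVm nU nV nUm nVm) as [k [_ [[x [Hx1 Hx2]] [y [Hy1 Hy2]]]]].
    exists (fun x => U' x /\ U m (Nat.iter k f x)), (fun x => V' x /\ V m (Nat.iter k f x)).
    repeat split.
    + apply open_and; auto. apply open_pre; auto. apply cont_iter; auto.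
    + apply open_and; auto. apply open_pre; auto. apply cont_iter; auto.
    + exists x; auto.
    + exists y; auto.
    + intros n [z [[Hz1 Hz2] [Hz3 Hz4]]] i Hi.
      destruct (Nat.eq_dec i m).
      * subst. exists (Nat.iter k f z). split; auto. rewrite iter_comm; auto.
      * apply HH; [|lia]. exists z; auto.
Qed.

Lemma multi f (t0 : T) : weakly_mixing d f -> metric_continuous d f ->
  forall m (U V : nat -> T -> Prop),
  (forall i, (i < m)%nat -> open1 d (U i) /\ open1 d (V i) /\ (exists x, U i x) /\ (exists x, V i x)) ->
  exists n, (1 <= n)%nat /\ exists a : nat -> T, forall i, (i < m)%nat -> U i (a i) /\ V i (Nat.iter n f (a i)).
Proof.
  intros Hw Hf m U V H.
  destruct (reduce f t0 Hw Hf m U V H) as [U' [V' [oU [oV [nU [nV HH]]]]]].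
  destruct (wm2 f U' U' V' V' Hw oU oU oV oV nU nU nV nV) as [n [Hn [Hh _]]].
  exists n; split; auto. apply (fin_choice t0 m (fun i a => U i a /\ V i (Nat.iter n f a))). intros i Hi.
  destruct (HH n Hh i Hi) as [x Hx]. exists x; auto.
Qed.

Lemma far (o : T) : infinite_diameter d -> forall Rr, exists x, Rr < d o x.
Proof.
  intros Hd Rr. destruct (Hd (2 * Rr)) as [x [y Hxy]].
  pose proof (d_tri x o y). rewrite (d_sym x o) in H.
  destruct (Rlt_dec Rr (d o x)). exists x; auto. exists y; lra.
Qed.

Lemma far_seq (o : T) : infinite_diameter d -> forall L m, exists w : nat -> T,
  forall i j, (i < m)%nat -> (j < m)%nat -> i <> j -> L < d (w i) (w j).
Proof.
  intros Hd L m.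
  assert (exists w : nat -> T, exists B, (forall i, (i < m)%nat -> d o (w i) <= B) /\
     forall i j, (i < m)%nat -> (j < m)%nat -> i <> j -> L < d (w i) (w j)) as [w [B [_ H]]].
  2: exists w; auto.
  induction m as [|m [w [B [HB Hw]]]].
  - exists (fun _ => o), 0. split; intros; lia.
  - destruct (far o Hd (Rabs B + Rabs L)) as [x Hx].
    exists (fun i => if Nat.eqb i m then x else w i), (Rmax B (d o x)). split.
    + intros i Hi. destruct (Nat.eqb_spec i m). apply Rmax_r.
      eapply Rle_trans; [apply HB; lia| apply Rmax_l].
    + assert (Hfar : forall i, (i < m)%nat -> L < d (w i) x).
      { intros i Hi. pose proof (HB i Hi). pose proof (d_tri o (w i) x).
        pose proof (Rle_abs B). pose proof (Rle_abs L). lra. }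
      intros i j Hi Hj Hij.
      destruct (Nat.eqb_spec i m); destruct (Nat.eqb_spec j m).
      * lia.
      * rewrite d_sym. apply Hfar; lia.
      * apply Hfar; lia.
      * apply Hw; lia.
Qed.

End M.

Definition inb {T : Type} (d : T -> T -> R) (b : T * R) (y : T) : Prop := d (fst b) y < snd b.

Definition step_spec {T : Type} (d : T -> T -> R) (f : T -> T) (n K : nat) (be : nat -> T * R)
  (t : T * R) (out : (nat -> T * R) * nat * nat * T) : Prop :=
  let '(be', p, q, z) := out in
  (forall k, (k < 2 * K + 1)%nat -> 0 < snd (be' k) < / (INR n + 1)) /\
  (forall k, (k < 2 * K)%nat -> d (fst (be (k / 2)%nat)) (fst (be' k)) + snd (be' k) < snd (be (k / 2)%nat)) /\
  (d (fst t) (fst (be' (2 * K)%nat)) + snd (be' (2 * K)%nat) < snd t) /\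
  (forall k y, (k < 2 * K + 1)%nat -> inb d (be' k) y -> d z (Nat.iter p f y) < / (INR n + 1)) /\
  (forall k k' y y', (k < 2 * K + 1)%nat -> (k' < 2 * K + 1)%nat -> k <> k' ->
     inb d (be' k) y -> inb d (be' k') y' -> INR n < d (Nat.iter q f y) (Nat.iter q f y')).

Section S.
Context {T : Type} (d : T -> T -> R) (Hm : is_metric d) (f : T -> T)
  (Hf : metric_continuous d f) (Hw : weakly_mixing d f) (Hd : infinite_diameter d).

Lemma step_lemma n K be t :
  (forall i, (i < K)%nat -> 0 < snd (be i)) -> 0 < snd t ->
  exists out, step_spec d f n K be t out.
Proof.
  intros Hbe Ht.
  set (t0 := fst t). set (M := (2 * K + 1)%nat).
  set (A := fun k => if Nat.ltb k (2 * K) then inb d (be (k / 2)%nat) else inb d t).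
  assert (HA : forall k, (k < M)%nat -> open1 d (A k) /\ exists x, A k x).
  { intros k Hk. unfold A. destruct (Nat.ltb_spec k (2 * K)).
    - split. apply ball_open; auto. exists (fst (be (k/2)%nat)). unfold inb.
      rewrite d_refl; auto. apply Hbe. apply Nat.Div0.div_lt_upper_bound. lia.
    - split. apply ball_open; auto. exists (fst t). unfold inb. rewrite d_refl; auto. }
  assert (Hn1 : 0 < / (INR n + 1)). { apply Rinv_0_lt_compat. pose proof (pos_INR n). lra. }
  set (z := t0).
  destruct (multi d f t0 Hw Hf M A (fun _ y => d z y < / (INR n + 1))) as [p [_ [a Ha]]].
  { intros i Hi. destruct (HA i Hi) as [o1 n1]. split; [auto|split; [apply ball_open; auto|split; auto]].
    exists z. rewrite d_refl; auto. }
  set (A' := fun k y => A k y /\ d z (Nat.iter p f y) < / (INR n + 1)).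
  assert (oA' : forall k, (k < M)%nat -> open1 d (A' k)).
  { intros k Hk. apply open_and; auto. apply HA; auto. apply (open_pre d) with (V := fun y => d z y < / (INR n + 1)).
    apply cont_iter; auto. apply ball_open; auto. }
  destruct (far_seq d Hm t0 Hd (INR n + 2) M) as [w Hwf].
  destruct (multi d f t0 Hw Hf M A' (fun k y => d (w k) y < 1)) as [q [_ [b Hb]]].
  { intros i Hi. split; [auto|split; [apply ball_open; auto|split]].
    exists (a i). apply Ha; auto. exists (w i). rewrite d_refl; auto; lra. }
  assert (Hk : forall k, (k < M)%nat -> exists r', 0 < r' /\ r' < / (INR n + 1) /\
     ((k < 2 * K)%nat -> d (fst (be (k / 2)%nat)) (b k) + r' < snd (be (k / 2)%nat)) /\
     (k = (2 * K)%nat -> d (fst t) (b k) + r' < snd t) /\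
     forall y, d (b k) y < r' -> d z (Nat.iter p f y) < / (INR n + 1) /\ d (w k) (Nat.iter q f y) < 1).
  { intros k Hkm. destruct (Hb k Hkm) as [[HAb Hpb] Hqb].
    assert (oG : open1 d (fun y => A' k y /\ d (w k) (Nat.iter q f y) < 1)).
    { apply open_and; auto. apply (open_pre d) with (V := fun y => d (w k) y < 1).
      apply cont_iter; auto. apply ball_open; auto. }
    destruct (oG (b k)) as [e [He HG]]. { split; auto. split; auto. }
    assert (Hsl : exists s, 0 < s /\ ((k < 2 * K)%nat -> d (fst (be (k / 2)%nat)) (b k) + s <= snd (be (k / 2)%nat)) /\
       (k = (2 * K)%nat -> d (fst t) (b k) + s <= snd t)).
    { unfold A in *. destruct (Nat.lt_ge_cases k (2 * K)) as [Hlt|Hge].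
      - assert (E : Nat.ltb k (2 * K) = true) by (apply Nat.ltb_lt; auto). rewrite E in *.
        exists (snd (be (k/2)%nat) - d (fst (be (k / 2)%nat)) (b k)). unfold inb in HAb.
        split. lra. split. intros; lra. intros; lia.
      - assert (E : Nat.ltb k (2 * K) = false) by (apply Nat.ltb_ge; auto). rewrite E in *.
        exists (snd t - d (fst t) (b k)). unfold inb in HAb.
        split. lra. split. intros; lia. intros; lra. }
    destruct Hsl as [s [Hs [Hs1 Hs2]]].
    exists (Rmin e (Rmin (s / 2) (/ (INR n + 1) / 2))).
    pose proof (Rmin_l e (Rmin (s / 2) (/ (INR n + 1) / 2))).
    pose proof (Rmin_r e (Rmin (s / 2) (/ (INR n + 1) / 2))).
    pose proof (Rmin_l (s / 2) (/ (INR n + 1) / 2)).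
    pose proof (Rmin_r (s / 2) (/ (INR n + 1) / 2)).
    assert (0 < Rmin e (Rmin (s / 2) (/ (INR n + 1) / 2))).
    { apply Rmin_glb_lt; auto. apply Rmin_glb_lt; lra. }
    split; [auto|split; [lra|split; [|split]]].
    - intros E; specialize (Hs1 E); lra.
    - intros E; specialize (Hs2 E); lra.
    - intros y Hy. destruct (HG y) as [[_ G1] G2]; [lra|]. auto. }
  destruct (fin_choice (t0, 1) M (fun k br => 0 < snd br /\ snd br < / (INR n + 1) /\
     ((k < 2 * K)%nat -> d (fst (be (k / 2)%nat)) (fst br) + snd br < snd (be (k / 2)%nat)) /\
     (k = (2 * K)%nat -> d (fst t) (fst br) + snd br < snd t) /\
     forall y, d (fst br) y < snd br -> d z (Nat.iter p f y) < / (INR n + 1) /\ d (w k) (Nat.iter q f y) < 1))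
    as [be' Hbe'].
  { intros k Hkm. destruct (Hk k Hkm) as [r' Hr']. exists (b k, r'). simpl. auto. }
  exists (be', p, q, z). unfold step_spec. split; [|split; [|split; [|split]]].
  - intros k Hkm. destruct (Hbe' k Hkm) as [H1 [H2 _]]. auto.
  - intros k Hkm. destruct (Hbe' k ltac:(unfold M; lia)) as [_ [_ [H3 _]]]. apply H3. auto.
  - destruct (Hbe' (2 * K)%nat ltac:(unfold M; lia)) as [_ [_ [_ [H4 _]]]]. apply H4. auto.
  - intros k y Hkm Hy. destruct (Hbe' k Hkm) as [_ [_ [_ [_ H5]]]]. apply H5. exact Hy.
  - intros k k' y y' Hk1 Hk2 Hne Hy Hy'.
    destruct (Hbe' k Hk1) as [_ [_ [_ [_ H5]]]]. destruct (H5 y Hy) as [_ Q1].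
    destruct (Hbe' k' Hk2) as [_ [_ [_ [_ H6]]]]. destruct (H6 y' Hy') as [_ Q2].
    pose proof (Hwf k k' Hk1 Hk2 Hne).
    pose proof (d_tri d Hm (w k) (Nat.iter q f y) (w k')).
    pose proof (d_tri d Hm (Nat.iter q f y) (Nat.iter q f y') (w k')).
    rewrite (d_sym d Hm (Nat.iter q f y') (w k')) in H1. lra.
Qed.
End S.

Fixpoint Kc (n : nat) : nat := match n with 0 => 0 | S m => 2 * Kc m + 1 end.

Definition Gty (T : Type) := nat -> nat -> (nat -> T * R) -> T * R -> (nat -> T * R) * nat * nat * T.

Fixpoint stage {T : Type} (G : Gty T) (tg : nat -> T * R) (n : nat) : nat -> T * R :=
  match n with
  | 0 => fun _ => tg 0%nat
  | S m => fst (fst (fst (G m (Kc m) (stage G tg m) (tg m))))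
  end.

Section C.
Context {T : Type} (d : T -> T -> R) (Hm : is_metric d) (Hc : complete_metric d) (f : T -> T)
  (G : Gty T) (tg : nat -> T * R)
  (HG : forall n K be t, (forall i, (i < K)%nat -> 0 < snd (be i)) -> 0 < snd t -> step_spec d f n K be t (G n K be t))
  (Htg : forall n, 0 < snd (tg n)).

Definition st := stage G tg.
Definition pp n := snd (fst (fst (G n (Kc n) (st n) (tg n)))).
Definition qq n := snd (fst (G n (Kc n) (st n) (tg n))).
Definition zz n := snd (G n (Kc n) (st n) (tg n)).

Lemma valid_spec n : (forall i, (i < Kc n)%nat -> 0 < snd (st n i)) /\
   step_spec d f n (Kc n) (st n) (tg n) (st (S n), pp n, qq n, zz n).
Proof.
  assert (E : forall m, (st (S m), pp m, qq m, zz m) = G m (Kc m) (st m) (tg m)).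
  { intros m. unfold pp, qq, zz. change (st (S m)) with (fst (fst (fst (G m (Kc m) (st m) (tg m))))). destruct (G m (Kc m) (st m) (tg m)) as [[[a b] c] e]. reflexivity. }
  induction n as [|n [IH1 IH2]].
  - split. simpl; intros; lia. rewrite E. apply HG; auto. simpl; intros; lia.
  - assert (V : forall i, (i < Kc (S n))%nat -> 0 < snd (st (S n) i)).
    { intros i Hi. destruct IH2 as [H1 _]. apply H1. simpl in Hi. lia. }
    split; auto. rewrite E. apply HG; auto.
Qed.

Lemma sR n k : (k < Kc (S n))%nat -> 0 < snd (st (S n) k) < / (INR n + 1).
Proof. intros Hk. destruct (valid_spec n) as [_ [H _]]. apply H. simpl in Hk. lia. Qed.

Lemma sC n k : (k < 2 * Kc n)%nat ->
  d (fst (st n (k / 2)%nat)) (fst (st (S n) k)) + snd (st (S n) k) < snd (st n (k / 2)%nat).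
Proof. intros Hk. destruct (valid_spec n) as [_ [_ [H _]]]. apply H. auto. Qed.

Lemma sD n : d (fst (tg n)) (fst (st (S n) (2 * Kc n)%nat)) + snd (st (S n) (2 * Kc n)%nat) < snd (tg n).
Proof. destruct (valid_spec n) as [_ [_ [_ [H _]]]]. apply H. Qed.

Lemma sP n k y : (k < Kc (S n))%nat -> inb d (st (S n) k) y -> d (zz n) (Nat.iter (pp n) f y) < / (INR n + 1).
Proof. intros Hk. destruct (valid_spec n) as [_ [_ [_ [_ [H _]]]]]. apply H. simpl in Hk; lia. Qed.

Lemma sQ n k k' y y' : (k < Kc (S n))%nat -> (k' < Kc (S n))%nat -> k <> k' ->
  inb d (st (S n) k) y -> inb d (st (S n) k') y' -> INR n < d (Nat.iter (qq n) f y) (Nat.iter (qq n) f y').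
Proof. intros Hk Hk'. destruct (valid_spec n) as [_ [_ [_ [_ [_ H]]]]]. apply H; simpl in *; lia. Qed.

Lemma disj n k k' y : (k < Kc (S n))%nat -> (k' < Kc (S n))%nat -> k <> k' ->
  inb d (st (S n) k) y -> inb d (st (S n) k') y -> False.
Proof.
  intros. pose proof (sQ n k k' y y H H0 H1 H2 H3). rewrite d_refl in H4; auto.
  pose proof (pos_INR n). lra.
Qed.

Definition Sset (x : T) : Prop :=
  exists n0, forall n, (n0 <= n)%nat -> exists i, (i < Kc n)%nat /\ inb d (st n i) x.

Fixpoint br (n0 i0 : nat) (g : nat -> nat -> bool) (j : nat) : nat :=
  match j with 0 => i0 | S j' => let k := br n0 i0 g j' in (2 * k + (if g j' k then 1 else 0))%nat end.

Lemma br_lt n0 i0 g j : (i0 < Kc n0)%nat -> (br n0 i0 g j < Kc (n0 + j))%nat.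
Proof.
  intros H. induction j as [|j IH]; simpl. rewrite Nat.add_0_r; auto.
  rewrite Nat.add_succ_r. simpl. destruct (g j (br n0 i0 g j)); lia.
Qed.

Lemma br_par n0 i0 g j : ((br n0 i0 g (S j)) / 2 = br n0 i0 g j)%nat.
Proof.
  change (br n0 i0 g (S j)) with (2 * br n0 i0 g j + (if g j (br n0 i0 g j) then 1 else 0))%nat.
  set (k := br n0 i0 g j). destruct (g j k).
  - replace (2 * k + 1)%nat with (Nat.b2n true + 2 * k)%nat by (simpl; lia). apply Nat.add_b2n_double_div2.
  - replace (2 * k + 0)%nat with (Nat.b2n false + 2 * k)%nat by (simpl; lia). apply Nat.add_b2n_double_div2.
Qed.

Lemma branch n0 i0 g : (i0 < Kc n0)%nat ->
  exists x, forall j, inb d (st (n0 + j) (br n0 i0 g j)) x.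
Proof.
  intros Hi0.
  set (c := fun j => fst (st (n0 + j)%nat (br n0 i0 g j))).
  set (r := fun j => snd (st (n0 + j)%nat (br n0 i0 g j))).
  assert (Hstep : forall j, d (c j) (c (S j)) + r (S j) < r j).
  { intros j. unfold c, r. rewrite Nat.add_succ_r. rewrite <- (br_par n0 i0 g j) at 1 2.
    apply sC. pose proof (br_lt n0 i0 g (S j) Hi0). rewrite Nat.add_succ_r in H. simpl in H.
    simpl. destruct (g j (br n0 i0 g j)); pose proof (br_lt n0 i0 g j Hi0); lia. }
  assert (Hrpos : forall j, 0 < r j).
  { intros j. unfold r. destruct (valid_spec (n0 + j)) as [V _]. apply V. apply br_lt; auto. }
  assert (Hrsmall : forall j, r (S j) < / (INR (n0 + j) + 1)).
  { intros j. unfold r. rewrite Nat.add_succ_r. apply sR. rewrite <- Nat.add_succ_r. apply br_lt; auto. }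
  assert (Hmono : forall j m, d (c j) (c (j + m)%nat) <= r j - r (j + m)%nat).
  { intros j m. induction m as [|m IH].
    - rewrite Nat.add_0_r. rewrite d_refl; auto. lra.
    - pose proof (d_tri d Hm (c j) (c (j + m)%nat) (c (j + S m)%nat)).
      rewrite Nat.add_succ_r in *. pose proof (Hstep (j + m)%nat). lra. }
  assert (Hle : forall j m, (j <= m)%nat -> d (c j) (c m) <= r j).
  { intros j m Hjm. replace m with (j + (m - j))%nat by lia. pose proof (Hmono j (m - j)%nat).
    pose proof (Hrpos (j + (m - j))%nat). lra. }
  destruct (Hc c) as [x Hx].
  { intros eps He. destruct (arch_inv (eps / 2)) as [N HN]; [lra|].
    exists (S N). intros m k Hm' Hk.
    pose proof (Hle (S N) m Hm') as Q1. pose proof (Hle (S N) k Hk) as Q2.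
    pose proof (d_tri d Hm (c m) (c (S N)) (c k)) as Q3. rewrite (d_sym d Hm (c m) (c (S N))) in Q3.
    pose proof (Hrsmall N) as Q4. pose proof (HN (n0 + N)%nat ltac:(lia)) as Q5. lra. }
  exists x. intros j. unfold inb. fold (c j). fold (r j).
  assert (Hcl : d (c (S j)) x <= r (S j)).
  { apply Rnot_lt_le. intros Hlt. destruct (Hx (d (c (S j)) x - r (S j))) as [N HN]; [lra|].
    pose proof (HN (Nat.max N (S j)) ltac:(lia)).
    pose proof (Hle (S j) (Nat.max N (S j)) ltac:(lia)).
    pose proof (d_tri d Hm (c (S j)) (c (Nat.max N (S j))) x). lra. }
  pose proof (d_tri d Hm (c j) (c (S j)) x). pose proof (Hstep j). lra.
Qed.


Lemma branch_S n0 i0 g x : (i0 < Kc n0)%nat -> (forall j, inb d (st (n0 + j) (br n0 i0 g j)) x) -> Sset x.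
Proof.
  intros Hi Hx. exists n0. intros n Hn. destruct (Nat.le_exists_sub n0 n Hn) as [m [Em _]].
  subst n. rewrite Nat.add_comm. exists (br n0 i0 g m). split; auto. apply br_lt; auto.
Qed.

Lemma scr_p x y : Sset x -> Sset y -> forall eps, 0 < eps -> exists N, forall n, (N <= n)%nat ->
  d (Nat.iter (pp n) f x) (Nat.iter (pp n) f y) < eps.
Proof.
  intros [nx Hx] [ny Hy] eps He. destruct (arch_inv (eps / 2)) as [N HN]; [lra|].
  exists (Nat.max N (Nat.max nx ny)). intros n Hn.
  destruct (Hx (S n) ltac:(lia)) as [i [Hi Hix]].
  destruct (Hy (S n) ltac:(lia)) as [i' [Hi' Hiy]].
  pose proof (sP n i x Hi Hix). pose proof (sP n i' y Hi' Hiy).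
  pose proof (HN n ltac:(lia)).
  pose proof (d_tri d Hm (Nat.iter (pp n) f x) (zz n) (Nat.iter (pp n) f y)).
  rewrite (d_sym d Hm (Nat.iter (pp n) f x) (zz n)) in H2. lra.
Qed.

Lemma scr_q x y : Sset x -> Sset y -> x <> y -> forall M, exists N, forall n, (N <= n)%nat ->
  M < d (Nat.iter (qq n) f x) (Nat.iter (qq n) f y).
Proof.
  intros [nx Hx] [ny Hy] Hxy M.
  assert (Hd0 : 0 < d x y).
  { destruct (Rle_lt_or_eq_dec 0 (d x y) (d_pos d Hm x y)); auto.
    exfalso. apply Hxy. destruct Hm as [_ [Hz _]]. apply Hz. auto. }
  destruct (arch_inv (d x y / 2)) as [N1 HN1]; [lra|].
  destruct (INR_archimed 1 M) as [N2 HN2]; [lra|].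
  exists (Nat.max (Nat.max N1 N2) (Nat.max nx ny)). intros n Hn.
  destruct (Hx (S n) ltac:(lia)) as [i [Hi Hix]].
  destruct (Hy (S n) ltac:(lia)) as [i' [Hi' Hiy]].
  assert (INR N2 <= INR n) by (apply le_INR; lia).
  destruct (Nat.eq_dec i i') as [E|E].
  - subst i'. exfalso. pose proof (sR n i Hi). unfold inb in Hix, Hiy.
    pose proof (HN1 n ltac:(lia)).
    pose proof (d_tri d Hm x (fst (st (S n) i)) y). rewrite (d_sym d Hm x (fst (st (S n) i))) in H2. lra.
  - pose proof (sQ n i i' x y Hi Hi' E Hix Hiy). lra.
Qed.

End C.

Theorem proposition2p7 (T : Type) (d : T -> T -> R) (f : T -> T) :
  is_metric d -> complete_metric d -> separable_metric d ->
  metric_continuous d f ->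
  infinite_diameter d -> weakly_mixing d f ->
  densely_uniformly_LY_chaotic d f.
Proof.
  intros Hm Hc [D [[e He] Hdense]] Hf Hd Hw.
  destruct (Hd 0) as [t0 _].
  set (tg := fun n => let (a, b) := Cantor.of_nat n in
              match e a with Some s => (s, / (INR b + 1)) | None => (t0, 1) end).
  assert (Htg : forall n, 0 < snd (tg n)).
  { intros n. unfold tg. destruct (Cantor.of_nat n) as [a b]. destruct (e a); simpl.
    apply Rinv_0_lt_compat. pose proof (pos_INR b); lra. lra. }
  assert (Hex : forall n K be t, exists out,
     (forall i, (i < K)%nat -> 0 < snd (be i)) -> 0 < snd t -> step_spec d f n K be t out).
  { intros n K be t. destruct (excluded_middle_informative
      ((forall i, (i < K)%nat -> 0 < snd (be i)) /\ 0 < snd t)) as [[H1 H2]|Hn].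
    - destruct (step_lemma d Hm f Hf Hw Hd n K be t H1 H2) as [out Ho]. exists out; auto.
    - exists (fun _ => (t0, 1), 0%nat, 0%nat, t0). intros H1 H2. exfalso; auto. }
  set (G := fun n K be t => proj1_sig (constructive_indefinite_description _ (Hex n K be t)) : (nat -> T * R) * nat * nat * T).
  assert (HG : forall n K be t, (forall i, (i < K)%nat -> 0 < snd (be i)) -> 0 < snd t -> step_spec d f n K be t (G n K be t)).
  { intros n K be t. unfold G. destruct (constructive_indefinite_description _ (Hex n K be t)). simpl. auto. }
  exists (Sset d G tg). split; [|split].
  -
    intros x eps Heps. destruct (Hdense x (eps / 2)) as [s [Ds Hs]]; [lra|].
    destruct (He s Ds) as [a Ha]. destruct (arch_inv (eps / 2)) as [b Hb]; [lra|].
    set (n := Cantor.to_nat (a, b)).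
    assert (Etg : tg n = (s, / (INR b + 1))).
    { unfold tg, n. rewrite Cantor.cancel_of_to. rewrite Ha. reflexivity. }
    assert (Hi0 : (2 * Kc n < Kc (S n))%nat) by (simpl; lia).
    destruct (branch d Hm Hc f G tg HG Htg (S n) (2 * Kc n) (fun _ _ => false) Hi0) as [y Hy].
    exists y. split. eapply branch_S; eauto.
    pose proof (Hy 0%nat) as Hy0. cbn [br] in Hy0. rewrite Nat.add_0_r in Hy0. unfold inb in Hy0.
    pose proof (sD d f G tg HG Htg n) as HD. rewrite Etg in HD. cbn [fst snd] in HD.
    pose proof (Hb b (le_n b)).
    pose proof (d_tri d Hm x s y). pose proof (d_tri d Hm s (fst (st G tg (S n) (2 * Kc n)%nat)) y).
    lra.
  -
    intros [e' He'].
    set (g := fun j k => match e' j with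
       | Some y => if Rlt_dec (d (fst (st G tg (S (S j)) (2 * k)%nat)) y) (snd (st G tg (S (S j)) (2 * k)%nat)) then true else false
       | None => false end).
    assert (Hi0 : (0 < Kc 1)%nat) by (simpl; lia).
    destruct (branch d Hm Hc f G tg HG Htg 1 0 g Hi0) as [x Hx].
    assert (Sx : Sset d G tg x) by (eapply branch_S; eauto).
    destruct (He' x Sx) as [m Hm'].
    pose proof (Hx (S m)) as Hxm.
    pose proof (br_lt 1 0 g m Hi0) as Hk.
    change (br 1 0 g (S m)) with (2 * br 1 0 g m + (if g m (br 1 0 g m) then 1 else 0))%nat in Hxm.
    change (1 + S m)%nat with (S (S m)) in Hxm. change (1 + m)%nat with (S m) in Hk. simpl in Hk.
    set (k := br 1 0 g m) in *.
    assert (Eg : g m k = if Rlt_dec (d (fst (st G tg (S (S m)) (2 * k)%nat)) x) (snd (st G tg (S (S m)) (2 * k)%nat)) then true else false)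
      by (unfold g; rewrite Hm'; reflexivity).
    destruct (Rlt_dec (d (fst (st G tg (S (S m)) (2 * k)%nat)) x) (snd (st G tg (S (S m)) (2 * k)%nat))) as [Hl|Hl];
      rewrite Eg in Hxm.
    + apply (disj d Hm f G tg HG Htg (S m) (2 * k) (2 * k + 1) x); auto; simpl; lia.
    + apply Hl. rewrite Nat.add_0_r in Hxm. exact Hxm.
  - split.
    + assert (Hi0 : (0 < Kc 1)%nat) by (simpl; lia).
      destruct (branch d Hm Hc f G tg HG Htg 1 0 (fun _ _ => false) Hi0) as [x Hx].
      destruct (branch d Hm Hc f G tg HG Htg 1 0 (fun _ _ => true) Hi0) as [y Hy].
      exists x, y. split; [eapply branch_S; eauto|split; [eapply branch_S; eauto|]].
      intros Exy. subst y. pose proof (Hx 1%nat) as H1. pose proof (Hy 1%nat) as H2.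
      simpl in H1, H2.
      apply (disj d Hm f G tg HG Htg 1 0 1 x); auto; simpl; lia.
    + exists (pp G tg), (qq G tg). intros x y Sx Sy Hxy. split.
      * apply scr_p; auto.
      * apply scr_q; auto.
Qed.
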